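(* Let $\langle A, \leq, \otimes, \ominus, \mathbf{1}\rangle$ be a residuated partially ordered monoid with bottom element $\bot$. Then for every $k\geq1$, $\langle Lex_k(A), \leq_k, \otimes^k, \ominus_k, \mathbf{1}^k\rangle$ is a residuated partially ordered monoid, where for $a=a_1\ldots a_k$, $b=b_1\ldots b_k\in Lex_k(A)$: $$a \ominus_k b = \begin{cases} (a_1 \ominus b_1) \ldots (a_k \ominus b_k) & \text{if } k+1 = \gamma(a,b) = \delta(a,b),\\ (a_1 \ominus b_1) \ldots (a_{\gamma(a,b)} \ominus b_{\gamma(a,b)})\,\bot^{k-\gamma(a,b)} & \text{if } k+1 \neq \gamma(a,b) \leq \delta(a,b),\\ (a_1 \ominus b_1) \ldots (a_{\delta(a,b)} \ominus b_{\delta(a,b)})\,\big(\bigvee Lex_{k-\delta(a,b)}(A)\big) & \text{otherwise.}\end{cases}$$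
   Context: A residuated partially ordered monoid $\langle A, \leq, \otimes, \ominus, \mathbf{1}\rangle$ consists of a partial order $\langle A,\leq\rangle$, a commutative monoid $\langle A,\otimes,\mathbf{1}\rangle$, and a binary operation $\ominus$ with $b \otimes c \leq a$ iff $c \leq a \ominus b$ for all $a,b,c\in A$. $a<b$ means $a\leq b$, $a\neq b$. $I(A) = \{c \in A \mid \forall a,b \in A.\ a \otimes c = b \otimes c \Rightarrow a = b\}$, $C(A)=A\setminus I(A)$. $Lex_k(A)\subseteq A^k$: $Lex_1(A) = A$, $Lex_{k+1}(A) = I(A)\, Lex_k(A) \cup C(A)\{\bot\}^k$ (concatenations of sequences; $\{\bot\}^k$ the singleton of $k$ copies of $\bot$). The order $\leq_k$: $\leq_1=\leq$, and for $k\geq2$, $a_1 \ldots a_k \leq_k b_1 \ldots b_k$ iff $a_1 < b_1$, or $a_1 = b_1$ and $a_2 \ldots a_k \leq_{k-1} b_2 \ldots b_k$. $\otimes^k$ is componentwise, $\mathbf{1}^k=\mathbf{1}\ldots\mathbf{1}$; $\bot^n$ is the sequence of $n$ copies of $\bot$; $\bigvee Lex_n(A)$ denotes the greatest element of $Lex_n(A)$ w.r.t. $\leq_n$ (the empty sequence when $n=0$). For $a,b\in Lex_k(A)$: $\gamma(a,b) = \min\{ i \mid a_i \ominus b_i \in C(A)\}$ and $\delta(a,b) = \min\{ i \mid (a_i \ominus b_i) \otimes b_i < a_i\}$, each equal to $k+1$ if the set is empty. *)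

(* Defs.v *)
(* an abstract carrier A with Prop-valued order; classical logic
   is used to decide the (non-decidable) case conditions. Sequences = lists,
   positions are 1-based as in the paper. *)
From Stdlib Require Import List Arith Classical ClassicalEpsilon.
Import ListNotations.

Definition residuated_pomonoid {X : Type} (P : X -> Prop) (le : X -> X -> Prop)
  (mul sub : X -> X -> X) (one : X) : Prop :=
  P one /\
  (forall a b, P a -> P b -> P (mul a b)) /\
  (forall a b, P a -> P b -> P (sub a b)) /\
  (forall a, P a -> le a a) /\
  (forall a b, P a -> P b -> le a b -> le b a -> a = b) /\
  (forall a b c, P a -> P b -> P c -> le a b -> le b c -> le a c) /\
  (forall a b c, P a -> P b -> P c -> mul a (mul b c) = mul (mul a b) c) /\
  (forall a b, P a -> P b -> mul a b = mul b a) /\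
  (forall a, P a -> mul one a = a) /\
  (forall a b c, P a -> P b -> P c -> (le (mul b c) a <-> le c (sub a b))).

Section Lex.
Context {A : Type} (le : A -> A -> Prop) (mul sub : A -> A -> A) (bot : A).

Definition lt (a b : A) : Prop := le a b /\ a <> b.

Definition Icanc (c : A) : Prop := forall a b, mul a c = mul b c -> a = b.
Definition Cnon (c : A) : Prop := ~ Icanc c.

(* Lex_n(A) as a predicate on lists; Lex_0 = {empty sequence} (convention). *)
Fixpoint Lex (n : nat) (s : list A) : Prop :=
  match n with
  | 0 => s = []
  | S n' =>
    match n' with
    | 0 => exists a, s = [a]
    | S _ => exists a t, s = a :: t /\
               ((Icanc a /\ Lex n' t) \/ (Cnon a /\ t = repeat bot n'))
    end
  end.

Fixpoint lexle (n : nat) (s t : list A) : Prop :=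
  match n with
  | 0 => True
  | S n' =>
    match s, t with
    | a :: s', b :: t' =>
      match n' with
      | 0 => le a b
      | S _ => lt a b \/ (a = b /\ lexle n' s' t')
      end
    | _, _ => False
    end
  end.

Fixpoint lmul (s t : list A) : list A :=
  match s, t with
  | a :: s', b :: t' => mul a b :: lmul s' t'
  | _, _ => []
  end.

Fixpoint lsub (s t : list A) : list A :=
  match s, t with
  | a :: s', b :: t' => sub a b :: lsub s' t'
  | _, _ => []
  end.

Definition lone (one : A) (n : nat) : list A := repeat one n.

(* gamma(a,b) = min { i | a_i - b_i in C(A) }, k+1 if empty *)
Fixpoint gamma (s t : list A) : nat :=
  match s, t with
  | a :: s', b :: t' =>
    if excluded_middle_informative (Cnon (sub a b)) then 1 else S (gamma s' t')
  | _, _ => 1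
  end.

(* delta(a,b) = min { i | (a_i - b_i) * b_i < a_i }, k+1 if empty *)
Fixpoint delta (s t : list A) : nat :=
  match s, t with
  | a :: s', b :: t' =>
    if excluded_middle_informative (lt (mul (sub a b) b) a) then 1
    else S (delta s' t')
  | _, _ => 1
  end.

Definition is_greatest (n : nat) (g : list A) : Prop :=
  Lex n g /\ forall s, Lex n s -> lexle n s g.

Definition bigvee (n : nat) : list A :=
  match n with
  | 0 => []
  | S _ => epsilon (inhabits []) (is_greatest n)
  end.

Definition lexsub (k : nat) (s t : list A) : list A :=
  let g := gamma s t in
  let d := delta s t in
  if andb (Nat.eqb (k + 1) g) (Nat.eqb (k + 1) d) then lsub s t
  else if andb (negb (Nat.eqb (k + 1) g)) (Nat.leb g d) then
    firstn g (lsub s t) ++ repeat bot (k - g)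
  else firstn d (lsub s t) ++ bigvee (k - d).

End Lex.

(* Main.v *)
Require Import Defs.
From Stdlib Require Import List Arith Classical ClassicalEpsilon Lia.
Import ListNotations.

Section S.
Variables (A : Type) (le : A -> A -> Prop) (mul sub : A -> A -> A) (one bot : A).

Lemma gamma_S s t : exists g, gamma mul sub s t = S g.
Proof. destruct s, t; simpl; eauto. destruct (excluded_middle_informative _); eauto. Qed.

Lemma L1 k a b s t : Cnon mul (sub a b) ->
  lexsub le mul sub bot (S k) (a::s) (b::t) = sub a b :: repeat bot k.
Proof.
intros H. unfold lexsub. cbn [gamma delta].
destruct (excluded_middle_informative (Cnon mul (sub a b))); [|contradiction].
rewrite Nat.add_1_r.
destruct (excluded_middle_informative _); simpl; rewrite Nat.sub_0_r; reflexivity.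
Qed.

Lemma L2 k a b s t : ~ Cnon mul (sub a b) -> Defs.lt le (mul (sub a b) b) a ->
  lexsub le mul sub bot (S k) (a::s) (b::t) = sub a b :: bigvee le mul bot k.
Proof.
intros H H2. unfold lexsub. cbn [gamma delta].
destruct (excluded_middle_informative (Cnon mul (sub a b))); [contradiction|].
destruct (excluded_middle_informative _); [|contradiction].
rewrite Nat.add_1_r. destruct (gamma_S s t) as [g ->].
simpl. rewrite Nat.sub_0_r. idtac.
rewrite !Bool.andb_false_r. reflexivity.
Qed.

Lemma L3 k a b s t : ~ Cnon mul (sub a b) -> ~ Defs.lt le (mul (sub a b) b) a ->
  lexsub le mul sub bot (S k) (a::s) (b::t) = sub a b :: lexsub le mul sub bot k s t.
Proof.
intros H H2. unfold lexsub. cbn [gamma delta].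
destruct (excluded_middle_informative (Cnon mul (sub a b))); [contradiction|].
destruct (excluded_middle_informative _); [contradiction|].
remember (gamma mul sub s t) as g. remember (delta le mul sub s t) as d.
cbn [Nat.eqb Nat.add Nat.leb firstn app Nat.sub lsub].
destruct (k + 1 =? g); destruct (k + 1 =? d); cbn [andb negb];
destruct (g <=? d); reflexivity.
Qed.

Hypothesis HA : residuated_pomonoid (fun _ : A => True) le mul sub one.
Hypothesis Hbot : forall a : A, le bot a.

Lemma Hrefl a : le a a. Proof. destruct HA as (_&_&_&H&_). auto. Qed.
Lemma Hanti a b : le a b -> le b a -> a = b. Proof. destruct HA as (_&_&_&_&H&_). auto. Qed.
Lemma Htrans a b c : le a b -> le b c -> le a c. Proof. destruct HA as (_&_&_&_&_&H&_). eauto. Qed.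
Lemma Hassoc a b c : mul a (mul b c) = mul (mul a b) c. Proof. destruct HA as (_&_&_&_&_&_&H&_). auto. Qed.
Lemma Hcomm a b : mul a b = mul b a. Proof. destruct HA as (_&_&_&_&_&_&_&H&_). auto. Qed.
Lemma Hone a : mul one a = a. Proof. destruct HA as (_&_&_&_&_&_&_&_&H&_). auto. Qed.
Lemma Hres a b c : le (mul b c) a <-> le c (sub a b). Proof. destruct HA as (_&_&_&_&_&_&_&_&_&H). auto. Qed.

Lemma mul_bot c : mul c bot = bot.
Proof. apply Hanti; [|apply Hbot]. apply Hres. apply Hbot. Qed.
Lemma bot_mul c : mul bot c = bot.
Proof. rewrite Hcomm. apply mul_bot. Qed.

Lemma mono x y z : le x y -> le (mul x z) (mul y z).
Proof.
intros H. assert (H1 : le y (sub (mul y z) z)) by (apply Hres; rewrite Hcomm; apply Hrefl).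
rewrite Hcomm. apply Hres. eapply Htrans; eauto.
Qed.
Lemma monol x y z : le x y -> le (mul z x) (mul z y).
Proof. intros; rewrite (Hcomm z x), (Hcomm z y); apply mono; auto. Qed.

Lemma resid_le a b : le (mul b (sub a b)) a.
Proof. apply Hres, Hrefl. Qed.

Lemma Icanc_mul x y : Icanc mul x -> Icanc mul y -> Icanc mul (mul x y).
Proof. intros Hx Hy u v E. apply Hx, Hy. rewrite <- !Hassoc. auto. Qed.
Lemma Icanc_l x y : Icanc mul (mul x y) -> Icanc mul x.
Proof. intros H u v E. apply H. rewrite !Hassoc, E. auto. Qed.
Lemma Icanc_one : Icanc mul one.
Proof. intros u v E. rewrite !(Hcomm _ one), !Hone in E. auto. Qed.
Lemma canc_l b x y : Icanc mul b -> mul b x = mul b y -> x = y.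
Proof. intros H E. apply H. rewrite !(Hcomm _ b). auto. Qed.

Lemma le_lt_eq a b : le a b <-> Defs.lt le a b \/ a = b.
Proof.
unfold Defs.lt. split.
- intros H. destruct (classic (a = b)); auto.
- intros [[H _]| ->]; auto using Hrefl.
Qed.

Lemma Lex_rep n : Lex mul bot n (repeat bot n).
Proof.
induction n as [|[|n] IH]; simpl; eauto.
exists bot, (bot :: repeat bot n). split; auto.
destruct (classic (Icanc mul bot)); [left|right]; split; auto.
Qed.

Lemma Lex_nil n : Lex mul bot n [] -> n = 0.
Proof. destruct n as [|[|n]]; simpl; auto; intros H; firstorder discriminate. Qed.

Lemma Lex_cons n a t : Lex mul bot (S n) (a :: t) <->
  Lex mul bot n t /\ (Cnon mul a -> t = repeat bot n).
Proof.
destruct n as [|n].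
- simpl. split.
  + intros [x H]. inversion H. auto.
  + intros [-> _]. eauto.
- change (Lex mul bot (S (S n)) (a :: t)) with
   (exists a0 t0, a :: t = a0 :: t0 /\
     ((Icanc mul a0 /\ Lex mul bot (S n) t0) \/ (Cnon mul a0 /\ t0 = repeat bot (S n)))).
  split.
  + intros (a0 & t0 & E & H). inversion E; subst.
    destruct H as [[H1 H2]|[H1 H2]]; split; auto.
    * intros C; contradiction.
    * subst; apply Lex_rep.
  + intros [H1 H2]. exists a, t. split; auto.
    destruct (classic (Icanc mul a)); [left|right]; auto.
Qed.

Lemma Lex_len n s : Lex mul bot n s -> length s = n.
Proof.
revert s; induction n; intros s H.
- simpl in H; subst; auto.
- destruct s. apply Lex_nil in H; discriminate.
  apply Lex_cons in H. simpl. f_equal. apply IHn; tauto.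
Qed.

Lemma lexle_cons n a s b t : lexle le (S n) (a :: s) (b :: t) <->
  Defs.lt le a b \/ (a = b /\ lexle le n s t).
Proof.
destruct n; simpl.
- rewrite le_lt_eq. intuition.
- tauto.
Qed.

Lemma lexle_refl n s : length s = n -> lexle le n s s.
Proof.
revert s; induction n; intros s H; [exact I|].
destruct s; [discriminate|]. apply lexle_cons. right; split; auto.
Qed.

Lemma lexle_anti n s t : length s = n -> length t = n ->
  lexle le n s t -> lexle le n t s -> s = t.
Proof.
revert s t; induction n; intros s t Hs Ht H1 H2.
- destruct s, t; try discriminate; auto.
- destruct s as [|a s]; [discriminate|]. destruct t as [|b t]; [discriminate|].
  apply lexle_cons in H1. apply lexle_cons in H2. unfold Defs.lt in *.
  destruct H1 as [[H1 H1']|[-> H1]]; destruct H2 as [[H2 H2']|[E H2]].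
  + elim H1'. apply Hanti; auto.
  + congruence.
  + congruence.
  + f_equal. apply IHn; simpl in *; auto.
Qed.

Lemma lexle_trans n s t u : length s = n -> length t = n -> length u = n ->
  lexle le n s t -> lexle le n t u -> lexle le n s u.
Proof.
revert s t u; induction n; intros s t u Hs Ht Hu H1 H2; [exact I|].
destruct s as [|a s]; [discriminate|]. destruct t as [|b t]; [discriminate|].
destruct u as [|c u]; [discriminate|].
apply lexle_cons in H1. apply lexle_cons in H2. apply lexle_cons. unfold Defs.lt in *.
destruct H1 as [[H1 H1']|[-> H1]]; destruct H2 as [[H2 H2']|[-> H2]].
- left. split. eapply Htrans; eauto. intros ->. apply H1'. apply Hanti; auto.
- left. split; auto.
- left. split; auto.
- right. split; auto. apply IHn with t; simpl in *; auto.
Qed.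

Lemma lexle_bot n s : length s = n -> lexle le n (repeat bot n) s.
Proof.
revert s; induction n; intros s H; [exact I|].
destruct s as [|a s]; [discriminate|]. simpl. apply lexle_cons.
destruct (classic (bot = a)).
- right; split; auto.
- left; split; auto.
Qed.

Lemma lmul_len s t : length s = length t -> length (lmul mul s t) = length s.
Proof. revert t; induction s; intros [|b t] H; simpl in *; try discriminate; auto. Qed.

Lemma lmul_rep_l n t : length t = n -> lmul mul (repeat bot n) t = repeat bot n.
Proof.
revert t; induction n; intros [|b t] H; simpl in *; try discriminate; auto.
rewrite bot_mul, IHn; auto.
Qed.

Lemma lmul_comm s t : lmul mul s t = lmul mul t s.
Proof. revert t; induction s; intros [|b t]; simpl; auto. rewrite Hcomm, IHs; auto. Qed.

Lemma lmul_assoc s t u : lmul mul s (lmul mul t u) = lmul mul (lmul mul s t) u.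
Proof.
revert t u; induction s; intros [|b t] [|c u]; simpl; auto. rewrite Hassoc, IHs; auto.
Qed.

Lemma lmul_one n s : length s = n -> lmul mul (repeat one n) s = s.
Proof.
revert s; induction n; intros [|b t] H; simpl in *; try discriminate; auto.
rewrite Hone, IHn; auto.
Qed.

Lemma Lex_lmul n s t : Lex mul bot n s -> Lex mul bot n t -> Lex mul bot n (lmul mul s t).
Proof.
revert s t; induction n; intros s t Hs Ht.
- simpl in *; subst; reflexivity.
- destruct s as [|a s]; [apply Lex_nil in Hs; discriminate|].
  destruct t as [|b t]; [apply Lex_nil in Ht; discriminate|].
  pose proof (Lex_len _ _ Hs) as Ls. pose proof (Lex_len _ _ Ht) as Lt.
  apply Lex_cons in Hs. apply Lex_cons in Ht. simpl. apply Lex_cons.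
  split. apply IHn; tauto.
  intros C. destruct (classic (Icanc mul a)) as [Ia|Ca].
  + destruct (classic (Icanc mul b)) as [Ib|Cb].
    * elim C. apply Icanc_mul; auto.
    * rewrite (proj2 Ht Cb), lmul_comm. apply lmul_rep_l. simpl in Ls; lia.
  + rewrite (proj2 Hs Ca). apply lmul_rep_l. simpl in *; lia.
Qed.

Lemma Lex_one n : Lex mul bot n (repeat one n).
Proof.
induction n; simpl; auto. apply Lex_cons. split; auto.
intros C; elim C; apply Icanc_one.
Qed.

Lemma top_ge c : le c (sub bot bot).
Proof. apply Hres. rewrite bot_mul. apply Hrefl. Qed.

Lemma greatest_ex n : exists g, is_greatest le mul bot (S n) g.
Proof.
unfold is_greatest. induction n as [|n [g [Hg1 Hg2]]].
- exists [sub bot bot]. split. apply Lex_cons; split; simpl; auto.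
  intros [|s1 s] H; [apply Lex_nil in H; discriminate|].
  apply Lex_cons in H. destruct H as [H _]. simpl in H; subst.
  apply lexle_cons. destruct (classic (s1 = sub bot bot)).
  + right; split; simpl; auto.
  + left; split; auto using top_ge.
- destruct (classic (Icanc mul (sub bot bot))) as [I|C].
  + exists (sub bot bot :: g). split.
    * apply Lex_cons. split; auto. intros C; contradiction.
    * intros [|s1 s] H; [apply Lex_nil in H; discriminate|].
      apply Lex_cons in H. apply lexle_cons. destruct (classic (s1 = sub bot bot)).
      -- right; split; auto. apply Hg2; tauto.
      -- left; split; auto using top_ge.
  + exists (sub bot bot :: repeat bot (S n)). split.
    * apply Lex_cons. split; auto using Lex_rep.
    * intros [|s1 s] H; [apply Lex_nil in H; discriminate|].
      pose proof (Lex_len _ _ H) as L.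
      apply Lex_cons in H. apply lexle_cons. destruct (classic (s1 = sub bot bot)).
      -- right; split; auto. subst. rewrite (proj2 H C). apply lexle_refl.
         apply repeat_length.
      -- left; split; auto using top_ge.
Qed.

Lemma bigvee_spec n : is_greatest le mul bot n (bigvee le mul bot n).
Proof.
destruct n.
- split; simpl; auto.
- simpl. apply epsilon_spec. apply greatest_ex.
Qed.

Lemma Lex_lexsub k s t : Lex mul bot k s -> Lex mul bot k t ->
  Lex mul bot k (lexsub le mul sub bot k s t).
Proof.
revert s t; induction k; intros s t Hs Ht.
- simpl in *; subst. reflexivity.
- destruct s as [|a s]; [apply Lex_nil in Hs; discriminate|].
  destruct t as [|b t]; [apply Lex_nil in Ht; discriminate|].
  apply Lex_cons in Hs. apply Lex_cons in Ht.
  destruct (classic (Cnon mul (sub a b))) as [C|C].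
  + rewrite L1 by auto. apply Lex_cons. split; auto using Lex_rep.
  + destruct (classic (Defs.lt le (mul (sub a b) b) a)) as [D|D].
    * rewrite L2 by auto. apply Lex_cons. split. apply bigvee_spec. intros; contradiction.
    * rewrite L3 by auto. apply Lex_cons. split. apply IHk; tauto. intros; contradiction.
Qed.

Lemma resid k a b c : Lex mul bot k a -> Lex mul bot k b -> Lex mul bot k c ->
  (lexle le k (lmul mul b c) a <-> lexle le k c (lexsub le mul sub bot k a b)).
Proof.
revert a b c; induction k; intros a b c Ha Hb Hc.
- simpl; tauto.
- destruct a as [|a1 a]; [apply Lex_nil in Ha; discriminate|].
  destruct b as [|b1 b]; [apply Lex_nil in Hb; discriminate|].
  destruct c as [|c1 c]; [apply Lex_nil in Hc; discriminate|].
  apply Lex_cons in Ha. apply Lex_cons in Hb. apply Lex_cons in Hc.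
  destruct Ha as [Ha Ha']. destruct Hb as [Hb Hb']. destruct Hc as [Hc Hc'].
  pose proof (Lex_len _ _ Ha) as La. pose proof (Lex_len _ _ Hb) as Lb.
  pose proof (Lex_len _ _ Hc) as Lc.
  assert (Hbc : Cnon mul b1 -> lexle le k (lmul mul b c) a).
  { intros C. rewrite (Hb' C), lmul_rep_l by auto. apply lexle_bot; auto. }
  assert (Hcc : Cnon mul c1 -> lexle le k (lmul mul b c) a).
  { intros C. rewrite (Hc' C), lmul_comm, lmul_rep_l by auto. apply lexle_bot; auto. }
  assert (Rx : le (mul b1 (sub a1 b1)) a1) by apply resid_le.
  simpl lmul. rewrite lexle_cons.
  set (x := sub a1 b1) in *.
  destruct (classic (Cnon mul x)) as [C|C].
  + rewrite L1 by auto. rewrite lexle_cons. unfold Defs.lt. split.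
    * intros H. assert (le c1 x).
      { apply Hres. destruct H as [[H _]|[-> _]]; auto using Hrefl. }
      destruct (classic (c1 = x)) as [E|E].
      -- right. split; auto. subst c1. rewrite (Hc' C). apply lexle_refl, repeat_length.
      -- left; auto.
    * intros H. assert (le c1 x) by (destruct H as [[H _]|[-> _]]; auto using Hrefl).
      assert (le (mul b1 c1) a1) by (apply Hres; auto).
      destruct (classic (mul b1 c1 = a1)) as [E|E]; [|left; auto].
      right. split; auto.
      destruct H as [[_ H]|[-> _]]; [|auto].
      destruct (classic (Icanc mul b1)) as [I|I]; [|auto].
      elim H. apply (canc_l b1); auto. apply Hanti.
      -- apply monol; auto.
      -- rewrite E; auto.
  + destruct (classic (Defs.lt le (mul x b1) a1)) as [D|D].
    * rewrite L2 by auto. rewrite lexle_cons. split.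
      -- intros H. assert (le c1 x).
         { apply Hres. destruct H as [[H _]|[-> _]]; auto using Hrefl. }
         destruct (classic (c1 = x)) as [E|E].
         ++ right. split; auto. apply bigvee_spec; auto.
         ++ left; split; auto.
      -- intros H. assert (le c1 x) by (destruct H as [[H _]|[-> _]]; auto using Hrefl).
         left. split. apply Hres; auto. intros E.
         apply (proj2 D). rewrite Hcomm. apply Hanti; auto.
         rewrite <- E at 1. apply monol; auto.
    * rewrite L3 by auto. rewrite lexle_cons.
      assert (Ex : mul b1 x = a1).
      { rewrite Hcomm. destruct (classic (mul x b1 = a1)); auto. elim D; split; auto.
        rewrite Hcomm; auto. }
      specialize (IHk a b c Ha Hb Hc). split.
      -- intros H. assert (le c1 x).
         { apply Hres. destruct H as [[H _]|[-> _]]; auto using Hrefl. }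
         destruct (classic (c1 = x)) as [E|E].
         ++ subst c1. right. split; auto. destruct H as [[_ H]|[_ H]].
            ** contradiction.
            ** apply IHk; auto.
         ++ left; split; auto.
      -- intros H. assert (le c1 x) by (destruct H as [[H _]|[-> _]]; auto using Hrefl).
         destruct H as [[_ H]|[-> H]].
         ++ assert (le (mul b1 c1) a1) by (apply Hres; auto).
            destruct (classic (mul b1 c1 = a1)) as [E|E]; [|left; split; auto].
            right. split; auto.
            destruct (classic (Icanc mul b1)) as [I|I]; [|auto].
            elim H. apply (canc_l b1); auto. fold x. rewrite E, Ex; reflexivity.
         ++ right. split; auto. apply IHk; auto.
Qed.

End S.

Theorem theorem2 (A : Type) (le : A -> A -> Prop) (mul sub : A -> A -> A)
  (one bot : A)
  (HA : residuated_pomonoid (fun _ : A => True) le mul sub one)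
  (Hbot : forall a : A, le bot a)
  (k : nat) (hk : 1 <= k) :
  residuated_pomonoid (Lex mul bot k) (lexle le k) (lmul mul)
    (lexsub le mul sub bot k) (lone one k).
Proof.
unfold residuated_pomonoid, lone.
repeat split.
- eapply Lex_one; eauto.
- intros; eapply Lex_lmul; eauto.
- intros; eapply Lex_lexsub; eauto.
- intros a Ha. eapply lexle_refl; eauto. eapply Lex_len; eauto.
- intros a b Ha Hb. eapply lexle_anti; eauto; eapply Lex_len; eauto.
- intros a b c Ha Hb Hc. eapply lexle_trans; eauto; eapply Lex_len; eauto.
- intros; eapply lmul_assoc; eauto.
- intros; eapply lmul_comm; eauto.
- intros a Ha. eapply lmul_one; eauto. eapply Lex_len; eauto.
- apply (resid A le mul sub one bot HA Hbot); auto.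
- apply (resid A le mul sub one bot HA Hbot); auto.
Qed.
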